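(* Let $F$ be a field and $L_1,\dots,L_m$ finite separable field extensions of $F$ with $[L_i:F]=n_i$. Let $n=\mathrm{lcm}(n_1,\dots,n_m)$ and $L=\prod_{i=1}^m L_i$. Let $\alpha_1,\dots,\alpha_{m-1}\in F^\times$. Then $$\Big(\alpha_1^{n/n_1},\alpha_2^{n/n_2},\dots,\alpha_{m-1}^{n/n_{m-1}},\prod_{i=1}^{m-1}\alpha_i^{-n/n_m}\Big)\in RT_{L/F}(F).$$
   Context: The multinorm torus $T_{L/F}$ is the kernel of $\prod_{i} R_{L_i/F}\mathbb{G}_m\to\mathbb{G}_m$, $(x_i)\mapsto\prod_i N_{L_i/F}(x_i)$. $RT_{L/F}(F)$ denotes the subgroup of $T_{L/F}(F)$ of elements $R$-equivalent to the identity, where $R$-equivalence is the equivalence relation generated by: $x_0\sim x_1$ if there is an $F$-rational map $f:\mathbb{P}^1\dashrightarrow T_{L/F}$ with $f(0)=x_0$ and $f(1)=x_1$. *)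

(* Defs.v *)
From HB Require Import structures.
From mathcomp Require Import all_boot all_order all_algebra all_field.
From Stdlib Require Import Relations.
Set Implicit Arguments. Unset Strict Implicit. Unset Printing Implicit Defensive.
Import GRing.Theory.
Local Open Scope ring_scope.

Definition mul_mx (F : fieldType) (L : fieldExtType F) (c : L)
  : 'M[F]_(\dim {:L}) :=
  \matrix_(a < \dim {:L}, b < \dim {:L})
     coord (vbasis {:L}) b (c * tnth (vbasis {:L}) a).

Definition normLF (F : fieldType) (L : fieldExtType F) (c : L) : F :=
  \det (mul_mx c).

(* Norm N_{L[t]/F[t]}(p) of a polynomial p in L[t] = L (x)_F F[t]:
   determinant of the F[t]-matrix of multiplication by p. *)
Definition normpoly (F : fieldType) (L : fieldExtType F) (p : {poly L})
  : {poly F} :=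
  \det (\matrix_(a < \dim {:L}, b < \dim {:L})
          \poly_(k < size p) (mul_mx p`_k a b)).

Definition in_multinorm_torus (F : fieldType) (m : nat)
  (L : 'I_m -> fieldExtType F) (x : forall i, L i) : Prop :=
  (forall i, x i != 0) /\ \prod_(i < m) normLF (x i) = 1.

(* An F-rational map f : P^1 --> T_{L/F} defined at 0 and 1, i.e. a point of
   T_{L/F}(F(t)) regular at t = 0 and t = 1.  Each component lies in
   L_i (x)_F F(t) = L_i(t) and is written p_i(t)/q_i(t) with p_i in L_i[t]
   nonzero and q_i in F[t] with q_i(0) q_i(1) <> 0 (every element of L_i(t)
   regular at 0 and 1 has such a form).  The torus equation
   prod_i N(p_i/q_i) = 1 in F(t) reads prod_i N(p_i) = prod_i q_i^[L_i:F]. *)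
Record ratmap_P1_torus (F : fieldType) (m : nat)
  (L : 'I_m -> fieldExtType F) := RatMap {
  rm_num : forall i, {poly L i};
  rm_den : forall i, {poly F};
  rm_num_nz : forall i, rm_num i != 0;
  rm_den0 : forall i, (rm_den i).[0] != 0;
  rm_den1 : forall i, (rm_den i).[1] != 0;
  rm_eq : \prod_(i < m) normpoly (rm_num i)
          = \prod_(i < m) (rm_den i) ^+ (\dim {: L i})
}.

Definition rm_eval (F : fieldType) (m : nat) (L : 'I_m -> fieldExtType F)
  (f : ratmap_P1_torus L) (a : F) : forall i, L i :=
  fun i => (rm_num f i).[a%:A] / ((rm_den f i).[a])%:A.

Definition R_link (F : fieldType) (m : nat) (L : 'I_m -> fieldExtType F)
  (x0 x1 : forall i, L i) : Prop :=
  exists f : ratmap_P1_torus L, rm_eval f 0 = x0 /\ rm_eval f 1 = x1.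

Definition R_equiv (F : fieldType) (m : nat) (L : 'I_m -> fieldExtType F) :=
  clos_refl_sym_trans _ (@R_link F m L).

Definition in_RT (F : fieldType) (m : nat) (L : 'I_m -> fieldExtType F)
  (x : forall i, L i) : Prop :=
  in_multinorm_torus x /\ R_equiv (fun i => 1) x.

(* Main.v *)
Require Import Defs.
From HB Require Import structures.
From mathcomp Require Import all_boot all_order all_algebra all_field.
From Stdlib Require Import FunctionalExtensionality Relations.
Import GRing.Theory.
Local Open Scope ring_scope.

Lemma dim_gt0 (F : fieldType) (L : fieldExtType F) : (0 < \dim {:L})%N.
Proof. exact: (adim_gt0 (aspacef L)). Qed.

Lemma mul_mx_alg (F : fieldType) (L : fieldExtType F) (c : F) :
  mul_mx (c%:A : L) = c%:M.
Proof.
apply/matrixP => a b; rewrite /mul_mx !mxE mulr_algl linearZ /=.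
rewrite (tnth_nth 0) coord_free ?(basis_free (vbasisP _)) //.
by rewrite mulr_natr.
Qed.

Lemma normLF_alg (F : fieldType) (L : fieldExtType F) (c : F) :
  normLF (c%:A : L) = c ^+ \dim {:L}.
Proof. by rewrite /normLF mul_mx_alg det_scalar. Qed.

Lemma normpoly_alg (F : fieldType) (L : fieldExtType F) (P : {poly F}) :
  normpoly (map_poly (in_alg L) P) = P ^+ \dim {:L}.
Proof.
rewrite /normpoly -det_scalar; congr (\det _).
apply/matrixP => a b; rewrite !mxE size_map_inj_poly; last 2 first.
- exact: fmorph_inj.
- exact: rmorph0.
apply/polyP => k; rewrite coef_poly coefMn coef_map /= mul_mx_alg mxE.
case: ltnP => // hk; last by rewrite nth_default // mul0rn.
Qed.

Lemma horner_alg_map (F : fieldType) (L : fieldExtType F) (P : {poly F}) (a : F) :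
  (map_poly (in_alg L) P).[a%:A] = (P.[a])%:A.
Proof. exact: (horner_map (in_alg L)). Qed.

Lemma prod_lift (R : comPzRingType) (m : nat) (G : 'I_m.+1 -> R) :
  \prod_(i < m.+1) G i = (\prod_(j < m) G (lift ord_max j)) * G ord_max.
Proof.
rewrite big_ord_recr /=; congr (_ * _); apply: eq_bigr => j _.
congr (G _); apply/val_inj; by rewrite /= /bump leqNgt ltn_ord.
Qed.

Definition ell {F : fieldType} (a : F) : {poly F} := 'X * (a - 1)%:P + 1.

Lemma ell0 (F : fieldType) (a : F) : (ell a).[0] = 1.
Proof. by rewrite /ell !hornerE. Qed.

Lemma ell1 (F : fieldType) (a : F) : (ell a).[1] = a.
Proof. by rewrite /ell !hornerE ?mul1r ?subrK. Qed.

Theorem mainTheorem20 (F : fieldType) (m : nat)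
  (L : 'I_m.+1 -> fieldExtType F)
  (Lsep : forall i, separable (1%VS : {vspace L i}) fullv)
  (alpha : 'I_m -> F) (alpha_nz : forall j, alpha j != 0) :
  let nd := fun i => \dim {: L i} in
  let n := \big[lcmn/1%N]_(i < m.+1) nd i in
  in_RT (fun i : 'I_m.+1 =>
    (if unlift ord_max i is Some j
     then alpha j ^+ (n %/ nd i)
     else (\prod_(j < m) alpha j ^+ (n %/ nd ord_max))^-1)%:A : L i).
Proof.
move=> nd n.
have /dvdn_biglcmP ndn := dvdnn n.
have ndn' : forall i, (n %/ nd i * nd i)%N = n.
  by move=> i; rewrite divnK // ndn.
have prodnz : \prod_(j < m) alpha j ^+ (n %/ nd ord_max) != 0.
  by apply/prodf_neq0 => j _; rewrite expf_neq0.
split.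
  split.
    move=> i; case: (unlift ord_max i) => [j|].
      by rewrite scaler_eq0 negb_or oner_neq0 expf_neq0 ?orbF.
    by rewrite scaler_eq0 negb_or oner_neq0 invr_eq0 prodnz.
  rewrite prod_lift unlift_none.
  under eq_bigr => j _ do rewrite liftK.
  under eq_bigr => j _ do rewrite normLF_alg -exprM ndn'.
  rewrite normLF_alg exprVn -prodrXl.
  under [X in _ * X^-1 = _]eq_bigr => j _ do rewrite -exprM ndn'.
  rewrite divff //; apply/prodf_neq0 => j _; rewrite expf_neq0 //.
pose P (i : 'I_m.+1) : {poly F} := if unlift ord_max i is Some j
   then ell (alpha j) ^+ (n %/ nd i) else 1.
pose Q (i : 'I_m.+1) : {poly F} := if unlift ord_max i is Some j
   then 1 else \prod_(j < m) ell (alpha j) ^+ (n %/ nd ord_max).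
have P0 : forall i, (P i).[0] = 1.
  by move=> i; rewrite /P; case: (unlift _ _) => [j|];
    rewrite ?hornerE ?horner_exp ?ell0 ?expr1n.
have Q0 : forall i, (Q i).[0] = 1.
  move=> i; rewrite /Q; case: (unlift _ _) => [j|]; rewrite ?hornerE //.
  rewrite horner_prod; apply: big1 => j _; by rewrite horner_exp ell0 expr1n.
have Q0' : forall i, (Q i).[0] != 0 by move=> i; rewrite Q0 oner_neq0.
have Q1 : forall i, (Q i).[1] != 0.
  move=> i; rewrite /Q; case: (unlift _ _) => [j|]; rewrite ?hornerE ?oner_neq0 //.
  rewrite horner_prod; under eq_bigr => j _ do rewrite horner_exp ell1.
  exact: prodnz.
have Pnz : forall i, map_poly (in_alg (L i)) (P i) != 0.
  move=> i; rewrite map_poly_eq0; apply/eqP => h.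
  by move: (P0 i); rewrite h horner0 => /eqP; rewrite eq_sym oner_eq0.
have Heq : \prod_(i < m.+1) normpoly (map_poly (in_alg (L i)) (P i))
          = \prod_(i < m.+1) (Q i) ^+ (\dim {: L i}).
  under eq_bigr => i _ do rewrite normpoly_alg.
  rewrite !prod_lift /P /Q unlift_none.
  under eq_bigr => j _ do rewrite liftK -exprM ndn'.
  under [in RHS]eq_bigr => j _ do rewrite liftK expr1n.
  by rewrite expr1n big1_eq mul1r mulr1 -prodrXl; apply: eq_bigr => j _;
    rewrite -exprM ndn'.
pose f := @RatMap F m.+1 L (fun i => map_poly (in_alg (L i)) (P i)) Q
  Pnz Q0' Q1 Heq.
apply: rst_step; exists f; split;
  apply: functional_extensionality_dep => i; rewrite /rm_eval /=.
  by rewrite horner_alg_map P0 Q0 scale1r divr1.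
rewrite horner_alg_map /P /Q; case: (unlift _ _) => [j|].
  by rewrite !hornerE subrK scale1r divr1.
rewrite hornerE horner_prod scale1r; under eq_bigr => j _ do rewrite horner_exp ell1.
by rewrite mul1r -[RHS]/(in_alg (L i) _) fmorphV.
Qed.
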